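(* Let $R:\mathbb R^d\to(0,\infty)$ satisfy $|R(x)-R(y)|\le|x-y|$ for all $x,y$, and let $\rho(x,y)=\inf_\gamma\int_\gamma \frac{|dz|}{R(z)}$, the infimum over all piecewise $C^1$ curves $\gamma$ in $\mathbb R^d$ joining $x$ and $y$. Then for all $x,y\in\mathbb R^d$, $|x-y|\le\frac12R(x)$ implies $\rho(x,y)\le 1$. *)

(* Defs.v *)
From HB Require Import structures.
From mathcomp Require Import all_boot all_order all_algebra.
From mathcomp Require Import all_classical all_reals all_analysis.
Set Implicit Arguments. Unset Strict Implicit. Unset Printing Implicit Defensive.
Import Order.TTheory GRing.Theory Num.Theory.
Import numFieldNormedType.Exports.
Local Open Scope classical_set_scope.
Local Open Scope ring_scope.

Definition enorm {R : realType} {d : nat} (x : 'rV[R]_d) : R :=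
  Num.sqrt (\sum_(i < d) (x ord0 i) ^+ 2).

(* A piecewise C^1 curve gamma : [0,1] -> R^d joining x to y, given by a
   partition 0 = t 0 < t 1 < ... < t n = 1 and, for each piece k < n, a
   C^1 function g k : R -> R^d (differentiable everywhere with continuous
   derivative) agreeing with gamma on [t k, t (k+1)]. *)
Definition pw_C1_curve {R : realType} {d : nat} (x y : 'rV[R]_d)
  (gamma : R -> 'rV[R]_d) (n : nat) (t : nat -> R) (g : nat -> R -> 'rV[R]_d)
  : Prop :=
  [/\ t 0%N = 0 /\ t n = 1, (forall k, (k < n)%N -> t k < t k.+1),
      (forall k, (k < n)%N ->
         (forall u, derivable (g k) u 1) /\ continuous (derive1 (g k)) /\
         {in `[t k, t k.+1], g k =1 gamma}),
      gamma 0 = x & gamma 1 = y].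

Definition curve_length {R : realType} {d : nat} (Rf : 'rV[R]_d -> R)
  (n : nat) (t : nat -> R) (g : nat -> R -> 'rV[R]_d) : \bar R :=
  (\sum_(k < n)
     \int[lebesgue_measure]_(u in `[t k, t k.+1])
        (enorm (derive1 (g k) u) / Rf (g k u))%:E)%E.

Definition rho {R : realType} {d : nat} (Rf : 'rV[R]_d -> R) (x y : 'rV[R]_d)
  : \bar R :=
  ereal_inf [set L | exists gamma n t g,
                pw_C1_curve x y gamma n t g /\ L = curve_length Rf n t g].

(* Main.v *)
Require Import Defs.
From HB Require Import structures.
From mathcomp Require Import all_boot all_order all_algebra.
From mathcomp Require Import all_classical all_reals all_analysis.
From mathcomp Require Import lra.
From mathcomp Require Import measurable_realfun.
Import Order.TTheory GRing.Theory Num.Theory.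
Import numFieldNormedType.Exports.
Local Open Scope ring_scope.
Lemma enormZ (R : realType) (d : nat) (a : R) (v : 'rV[R]_d) :
  enorm (a *: v) = `|a| * enorm v.
Proof.
rewrite /enorm.
have -> : \sum_(i < d) ((a *: v) ord0 i) ^+ 2 = a ^+ 2 * \sum_(i < d) (v ord0 i) ^+ 2.
  by rewrite mulr_sumr; apply: eq_bigr => i _; rewrite mxE exprMn.
by rewrite sqrtrM ?sqr_ge0 // sqrtr_sqr.
Qed.

Lemma enorm_ge0 (R : realType) (d : nat) (v : 'rV[R]_d) : 0 <= enorm v.
Proof. exact: sqrtr_ge0. Qed.

Lemma line_derive (R : realType) (d : nat) (x w : 'rV[R]_d) (u : R) :
  is_derive u 1 (fun t : R => x + t *: w) w.
Proof.
have H : is_derive u (1:R) (fun t : R => t *: w) w.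
  apply: DeriveDef; first exact: diff_derivable.
  by rewrite deriveE // diff_val scale1r.
have := is_deriveD (is_derive_cst x u 1) H.
by rewrite add0r.
Qed.

Theorem lemma1p4 (R : realType) (d : nat) (Rf : 'rV[R]_d -> R)
  (Rpos : forall x, 0 < Rf x)
  (Rlip : forall x y, `|Rf x - Rf y| <= enorm (x - y)) :
  forall x y : 'rV[R]_d, enorm (x - y) <= Rf x / 2 -> (rho Rf x y <= 1%:E)%E.
Proof.
move=> x y hxy.
set w := y - x.
set gam := fun t : R => x + t *: w.
set c := enorm w.
have cE : c = enorm (x - y).
  by rewrite /c /w -opprB -scaleN1r enormZ normrN normr1 mul1r.
have dg : forall u, derive1 gam u = w.
  by move=> u; rewrite derive1E; apply: derive_val; exact: line_derive.
set h := fun u => Rf (gam u).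
have hlip : forall u v, `|h u - h v| <= `|u - v| * c.
  move=> u v; apply: (le_trans (Rlip _ _)).
  rewrite /gam opprD addrACA subrr add0r -scalerBl.
  by rewrite enormZ.
have hcont : continuous h.
  move=> u; apply/cvgrPdist_lt => e e0.
  have c1 : 0 < c + 1 by rewrite ltr_wpDl // enorm_ge0.
  have := @near_ball _ _ u _ (divr_gt0 e0 c1).
  apply: filterS => v; rewrite /ball /= => huv.
  apply: (le_lt_trans (hlip u v)).
  apply: (@le_lt_trans _ _ (`|u - v| * (c + 1))).
    by rewrite ler_wpM2l // lerDl.
  by rewrite -ltr_pdivlMr.
have hlow : forall u, 0 <= u <= 1 -> Rf x / 2 <= h u.
  move=> u /andP[u0 u1].
  have := Rlip (gam u) x.
  rewrite /gam addrAC subrr add0r enormZ (ger0_norm u0) -/c => H.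
  have : Rf x - h u <= u * c by apply: le_trans H; rewrite -normrN opprB ler_norm.
  have : u * c <= c by rewrite ler_piMl // enorm_ge0.
  move: hxy; rewrite -cE /h => ? ? ?; lra.
apply: (@le_trans _ _ (curve_length Rf 1 (fun k => k%:R) (fun _ => gam))).
  apply: ereal_inf_lbound; exists gam, 1%N, (fun k => k%:R), (fun _ => gam).
  split; last by [].
  split.
  - by split.
  - by case=> [|k].
  - move=> k _; split; first by move=> u; by case: (line_derive _ _ x w u).
    split; last by move=> ?.
    have -> : derive1 gam = cst w by apply/funext => u; rewrite dg.
    exact: cst_continuous.
  - by rewrite /gam scale0r addr0.
  - by rewrite /gam scale1r /w addrC subrK.
rewrite /curve_length big_ord1 /=.
have mD : measurable (`[0%:R, 1%:R] : set R) by exact: measurable_itv.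
rewrite -/gam.
under eq_integral => u _ do rewrite dg -/c -/(h u).
apply: (@le_trans _ _ (\int[lebesgue_measure]_(u in `[0%:R,1%:R]) (cst 1 u))%E).
  apply: ge0_le_integral => //.
  - move=> u _; have H0 : (0 <= c / h u)%R by apply: divr_ge0; [exact: enorm_ge0 | exact/ltW/Rpos].
    by move: H0; rewrite -lee_fin.
  - apply/measurable_EFinP; apply: measurable_funTS; apply: continuous_measurable_fun.
    move=> u; apply: (@continuousM _ _ (cst c) (fun u => (h u)^-1)); first exact: cst_continuous.
    apply: continuousV; [exact: lt0r_neq0 (Rpos _) | exact: hcont].
  - move=> u; rewrite /= in_itv /= => Du; rewrite lee_fin ler_pdivrMr //.
    rewrite /cst mul1r; apply: le_trans (hlow _ Du); by rewrite cE.
    exact: Rpos.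
rewrite integral_cst // mul1e.
have H1 : (lebesgue_measure (`[0%:R, 1%:R] : set R) = 1)%E.
  rewrite lebesgue_measure_itv /= lte_fin ltr01 /=.
  by rewrite oppr0 adde0.
have H2 : (lebesgue_measure (`[0%:R, 1%:R] : set R) <= 1)%E by rewrite H1.
exact: H2.
Qed.
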